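(* Let $\mathcal G=(\mathcal V,\mathcal E,w)$ be a finite, undirected, connected graph with $n\ge2$ vertices and positive edge weights, and let $\hat L$ be its normalized Laplacian. Let $w_1,\dots,w_r$ be the pairwise distinct values taken by the weights of those $(m,k)$-stars of $\mathcal G$ whose weight is defined, and for each $i$ let $\mathcal S_{w_i}$ be the set of $(m,k)$-stars of $\mathcal G$ of weight $w_i$, with $\deg(\mathcal S_{w_i})=\sum_{S_{m,k}\in\mathcal S_{w_i}}(m-1)$. If $r\ge1$, then $1$ is an eigenvalue of $\hat L$ with algebraic multiplicity at least $\sum_{i=1}^r\deg(\mathcal S_{w_i})$.
   Context: Weighted adjacency matrix: $A_{ij}=w(i,j)$ if $\{i,j\}\in\mathcal E$, else $0$; strength $s(i)=\sum_jA_{ij}$. The normalized Laplacian has entries $\hat L_{ii}=1$, $\hat L_{ij}=-w(i,j)/\sqrt{s(i)s(j)}$ if $i\sim j$, and $0$ otherwise. An $(m,k)$-star of $\mathcal G$ is a pair $(\mathcal V_1,\mathcal V_2)$ of disjoint vertex sets with $|\mathcal V_1|=m\ge2$, $|\mathcal V_2|=k$, $m+k\le n$, such that every vertex of $\mathcal V_1$ is adjacent to every vertex of $\mathcal V_2$ and to no vertex outside $\mathcal V_2$; the sets are uniquely determined, i.e. $\mathcal V_1$ is the set of all vertices whose neighbourhood is exactly $\mathcal V_2$. Its degree is $m-1$. Its weight is defined only when $w(i,j)=w(i',j)$ for all $i,i'\in\mathcal V_1$, $j\in\mathcal V_2$, and then equals $\sum_{j\in\mathcal V_2}w(i,j)$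 for any $i\in\mathcal V_1$. *)

(* Defs.v *)
From HB Require Import structures.
From mathcomp Require Import all_boot all_order all_algebra.
Set Implicit Arguments. Unset Strict Implicit. Unset Printing Implicit Defensive.
Import Order.TTheory GRing.Theory Num.Theory.
Local Open Scope ring_scope.

(* A weighted simple graph on vertex set 'I_n is given by a weight function
   w : 'I_n -> 'I_n -> R; {i,j} is an edge iff w i j != 0. *)

Section Graph.
Variables (R : rcfType) (n : nat) (w : 'I_n -> 'I_n -> R).

Definition adjb (i j : 'I_n) : bool := w i j != 0.

Definition weighted_simple_graph : Prop :=
  [/\ forall i j, w i j = w j i, forall i, w i i = 0 & forall i j, 0 <= w i j].

Definition connected_graph : Prop := forall i j, connect adjb i j.

Definition adjmx : 'M[R]_n := \matrix_(i, j) (if adjb i j then w i j else 0).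
Definition strength (i : 'I_n) : R := \sum_j adjmx i j.

Definition norm_laplacian : 'M[R]_n :=
  \matrix_(i, j) (if i == j then 1
                  else if adjb i j then - (w i j / Num.sqrt (strength i * strength j))
                  else 0).

Definition nbhd (i : 'I_n) : {set 'I_n} := [set j | adjb i j].

(* (m,k)-star (V1,V2) with m = #|V1|, k = #|V2| *)
Definition is_star (V1 V2 : {set 'I_n}) : bool :=
  [&& (2 <= #|V1|)%N, [disjoint V1 & V2], (#|V1| + #|V2| <= n)%N,
      [forall i in V1, nbhd i == V2] &
      [forall i, (nbhd i == V2) ==> (i \in V1)]].

Definition star_weight_defined (V1 V2 : {set 'I_n}) : bool :=
  [forall i in V1, forall i' in V1, forall j in V2, w i j == w i' j].

(* weight of a star: sum_{j in V2} w(i,j) for (any/some) i in V1 *)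
Definition star_weight (p : {set 'I_n} * {set 'I_n}) : R :=
  if [pick i in p.1] is Some i then \sum_(j in p.2) w i j else 0.

Definition weighted_stars : {set {set 'I_n} * {set 'I_n}} :=
  [set p | is_star p.1 p.2 && star_weight_defined p.1 p.2].

Definition star_weight_values : seq R :=
  undup [seq star_weight p | p in weighted_stars].

Definition deg_stars_of_weight (x : R) : nat :=
  (\sum_(p in weighted_stars | star_weight p == x) (#|p.1| - 1))%N.

End Graph.

(* Main.v *)
Require Import Defs.
From mathcomp Require Import all_boot all_order all_algebra ring.
Set Implicit Arguments. Unset Strict Implicit. Unset Printing Implicit Defensive.
Import Order.TTheory GRing.Theory Num.Theory.
Local Open Scope ring_scope.

Section Proofs.
Variables (R : rcfType) (n : nat) (w : 'I_n -> 'I_n -> R).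

Local Notation S := (weighted_stars w).

Lemma starP p : p \in S -> [/\ (2 <= #|p.1|)%N, [disjoint p.1 & p.2],
   forall i, i \in p.1 -> nbhd w i = p.2,
   forall i, (i \in p.1) = (nbhd w i == p.2) &
   forall i i' j, i \in p.1 -> i' \in p.1 -> j \in p.2 -> w i j = w i' j].
Proof.
rewrite inE => /andP[/and5P[h2 hd _ /forall_inP h1 /forallP h3] /forall_inP hw].
split => //.
- by move=> i /h1 /eqP.
- move=> i; apply/idP/idP; [exact: h1 | exact: (implyP (h3 i))].
- move=> i i' j hi hi' hj.
  by move: (hw i hi) => /forall_inP/(_ i' hi')/forall_inP/(_ j hj)/eqP.
Qed.

Lemma adjE i j : adjb w i j = (j \in nbhd w i).
Proof. by rewrite /nbhd inE. Qed.

Lemma star_uniq p q i : p \in S -> q \in S -> i \in p.1 -> i \in q.1 -> p = q.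
Proof.
move=> pS qS ip iq; case: (starP pS) => _ _ hp1 hp _; case: (starP qS) => _ _ hq1 hq _.
have e2: p.2 = q.2 by rewrite -(hp1 i ip) (hq1 i iq).
have e1: p.1 = q.1 by apply/setP => j; rewrite hp hq e2.
by rewrite [p]surjective_pairing [q]surjective_pairing e1 e2.
Qed.

Lemma same_adj p i i' j : p \in S -> i \in p.1 -> i' \in p.1 ->
  adjb w i j = adjb w i' j.
Proof. by case/starP => _ _ h1 _ _ hi hi'; rewrite !adjE !h1. Qed.

Lemma same_w p i i' j : p \in S -> i \in p.1 -> i' \in p.1 ->
  adjb w i j -> w i j = w i' j.
Proof.
move=> pS hi hi'; case: (starP pS) => _ _ h1 _ hw.
by rewrite adjE h1 // => hj; apply: hw.
Qed.

Lemma adjF p i k : p \in S -> i \in p.1 -> k \in p.1 -> adjb w i k = false.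
Proof.
move=> pS hi hk; case: (starP pS) => _ hd h1 _ _.
by rewrite adjE h1 // (disjointFr hd hk).
Qed.

Lemma same_strength p i i' : p \in S -> i \in p.1 -> i' \in p.1 ->
  strength w i = strength w i'.
Proof.
move=> pS hi hi'; rewrite /strength; apply: eq_bigr => j _; rewrite !mxE.
rewrite (same_adj j pS hi hi'); case: ifP => // a.
by apply: (same_w pS hi hi'); rewrite (same_adj j pS hi hi').
Qed.

Definition Bo i j : R := if i == j then 0 else if adjb w i j then
  - (w i j / Num.sqrt (strength w i * strength w j)) else 0.

Lemma LE i j : norm_laplacian w i j = (i == j)%:R + Bo i j.
Proof. by rewrite mxE /Bo; case: eqP => _; rewrite ?addr0 ?add0r. Qed.

Lemma Bo_eq p i i' j : p \in S -> i \in p.1 -> i' \in p.1 -> Bo i j = Bo i' j.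
Proof.
move=> pS hi hi'; rewrite /Bo.
case: (eqVneq i j) => [<-|nij].
  by case: eqP => // _; rewrite (same_adj i pS hi' hi) (adjF pS hi hi).
case: (eqVneq i' j) => [<-|nij'].
  by rewrite (adjF pS hi hi').
rewrite (same_adj j pS hi hi') (same_strength pS hi hi'); case: ifP => // a.
by rewrite (same_w pS hi hi') // (same_adj j pS hi hi').
Qed.

Definition cf i : 'I_n := if [pick p in S | i \in p.1] is Some p
  then arg_min i (fun j => j \in p.1) (@nat_of_ord n) else i.

Lemma pick_star p i : p \in S -> i \in p.1 -> [pick q in S | i \in q.1] = Some p.
Proof.
move=> pS ip; case: pickP => [q /andP[qS iq] | /(_ p)]; first by rewrite (star_uniq qS pS iq ip).
by rewrite pS ip.
Qed.

Lemma cf_star p i : p \in S -> i \in p.1 ->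
  cf i \in p.1 /\ forall j, j \in p.1 -> (cf i <= j)%N.
Proof.
move=> pS ip; rewrite /cf (pick_star pS ip).
by case: (@arg_minnP _ i (fun j => j \in p.1) (@nat_of_ord n) ip) => m hm hmin.
Qed.

Lemma cf_class p i j : p \in S -> i \in p.1 -> j \in p.1 -> cf i = cf j.
Proof.
move=> pS ip jp; case: (cf_star pS ip) => ci mi; case: (cf_star pS jp) => cj mj.
by apply/val_inj/eqP; rewrite /= eqn_leq mi // mj.
Qed.

Lemma cf_le i : (cf i <= i)%N.
Proof.
case: (pickP (fun p => (p \in S) && (i \in p.1))) => [p /andP[pS ip]|h].
  by have [_ ->] := cf_star pS ip.
by rewrite /cf; case: pickP => [p hp | //]; rewrite h in hp.
Qed.

Definition K := [set i | cf i != i].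

Lemma K_star i : i \in K -> exists2 p, p \in S & i \in p.1.
Proof.
by rewrite inE /cf; case: pickP => [p /andP[pS ip] _ | _]; [exists p | rewrite eqxx].
Qed.


Local Notation L := (norm_laplacian w).
Local Notation M := (char_poly_mx L).

Lemma Mentry i j : M i j = 'X *+ (i == j) - ((i == j)%:R + Bo i j)%:P.
Proof. by rewrite /char_poly_mx !mxE /Bo; case: eqP => _; rewrite ?addr0 ?add0r. Qed.

Lemma Mdiff i : i \in K -> forall j,
  M i j - M (cf i) j = ('X - 1) * ((i == j)%:R - (cf i == j)%:R).
Proof.
move=> /K_star [p pS ip] j; have [cp _] := cf_star pS ip.
rewrite !Mentry (Bo_eq j pS ip cp) !polyCD.
by case: (i == j); case: (cf i == j); rewrite /= ?mulr1n ?mulr0n ?polyC1 ?polyC0; ring.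
Qed.

Definition Emx : 'M[{poly R}]_n :=
  \matrix_(i, j) ((i == j)%:R - ((i \in K) && (j == cf i))%:R).
Definition Mp : 'M[{poly R}]_n :=
  \matrix_(i, j) (if i \in K then (i == j)%:R - (cf i == j)%:R else M i j).
Definition dvec : 'rV[{poly R}]_n := \row_i (if i \in K then 'X - 1 else 1).

Lemma detEmx : \det Emx = 1.
Proof.
rewrite det_trig; last first.
  apply/is_trig_mxP => i j lt; rewrite mxE; have -> : (i == j) = false by apply/negbTE/eqP => e; move: lt; rewrite e ltnn.
  have -> : (j == cf i) = false.
    by apply/negbTE/eqP => e; move: (cf_le i); rewrite -e leqNgt lt.
  by rewrite andbF subr0.
rewrite big1 // => i _; rewrite mxE eqxx.
case: (boolP (i \in K)) => iK /=; last by rewrite subr0.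
by move: iK; rewrite inE eq_sym => /negbTE ->; rewrite subr0.
Qed.

Lemma EM : Emx *m M = diag_mx dvec *m Mp.
Proof.
apply/matrixP => i j; rewrite mul_diag_mx [X in X = _]mxE [X in _ = X]mxE [dvec _ _]mxE [Mp _ _]mxE.
under eq_bigr => k _ do rewrite mxE mulrBl.
rewrite sumrB (bigD1 i) //= eqxx mul1r big1 ?addr0; last first.
  by move=> k /negbTE; rewrite eq_sym => ->; rewrite mul0r.
case: (boolP (i \in K)) => iK /=.
  rewrite (bigD1 (cf i)) //= eqxx mul1r big1 ?addr0; last first.
    by move=> k /negbTE ->; rewrite mul0r.
  by rewrite Mdiff.
by rewrite big1 ?subr0 ?mul1r // => k _; rewrite mul0r.
Qed.

Lemma char_dvd : (('X - 1%:P) ^+ #|K| %| char_poly L)%R.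
Proof.
have -> : char_poly L = \det (Emx *m M) by rewrite det_mulmx detEmx mul1r.
rewrite EM det_mulmx det_diag.
under eq_bigr => i _ do rewrite mxE.
by rewrite -big_mkcond /= prodr_const polyC1 dvdp_mulIl.
Qed.

Lemma K_mup : (#|K| <= mup 1 (char_poly L))%N.
Proof. by rewrite mup_geq ?char_dvd // monic_neq0 // char_poly_monic. Qed.


Definition st i := odflt (set0, set0) [pick p in S | i \in p.1].

Lemma st_eq p i : p \in S -> i \in p.1 -> st i = p.
Proof. by move=> pS ip; rewrite /st (pick_star pS ip). Qed.

Lemma count_K : (\sum_(p in S) (#|p.1| - 1) <= #|K|)%N.
Proof.
rewrite -sum1_card (partition_big st (fun p => p \in S)) /=; last first.
  by move=> i /K_star [p pS ip]; rewrite (st_eq pS ip).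
apply: leq_sum => q qS; rewrite sum1dep_card.
case: (starP qS) => h2 _ _ _ _.
have [x0 xq] : exists x0, x0 \in q.1.
  by apply/card_gt0P; apply: leq_trans h2.
have [mq _] := cf_star qS xq.
rewrite [#|q.1|](cardsD1 (cf x0)) mq add1n subSS subn0.
apply: subset_leq_card; apply/subsetP => j; rewrite !inE => /andP[nj jq].
rewrite (st_eq qS jq) eqxx andbT (cf_class qS jq xq) eq_sym //.
Qed.

Lemma sum_values : (\sum_(x <- star_weight_values w) deg_stars_of_weight w x
   = \sum_(p in S) (#|p.1| - 1))%N.
Proof.
rewrite /deg_stars_of_weight.
under eq_bigr => x _ do rewrite big_mkcondr /=.
rewrite exchange_big /=; apply: eq_bigr => p pS.
rewrite -big_mkcond big_const_seq /=.
have -> : count (fun x => star_weight w p == x) (star_weight_values w) = 1%N.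
  rewrite (@eq_count _ _ (pred1 (star_weight w p))); last by move=> x /=; rewrite eq_sym.
  by rewrite count_uniq_mem ?undup_uniq // mem_undup image_f.
by rewrite /= addn0.
Qed.

End Proofs.

Unset Implicit Arguments.
Theorem corollary2 (R : rcfType) (n : nat) (w : 'I_n -> 'I_n -> R) :
  (2 <= n)%N ->
  weighted_simple_graph w ->
  connected_graph w ->
  (1 <= size (star_weight_values w))%N ->
  root (char_poly (norm_laplacian w)) 1 /\
  (\sum_(x <- star_weight_values w) deg_stars_of_weight w x
     <= mup 1 (char_poly (norm_laplacian w)))%N.
Proof.
move=> _ _ _ hsz.
have key : (\sum_(x <- star_weight_values w) deg_stars_of_weight w x
     <= mup 1 (char_poly (norm_laplacian w)))%N.
  by rewrite sum_values (leq_trans (count_K w)) ?K_mup.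
split => //.
have [p pS] : exists p, p \in weighted_stars w.
  apply/card_gt0P; apply: leq_trans hsz _.
  by rewrite /star_weight_values (leq_trans (size_undup _)) // size_image.
have pos : (0 < \sum_(x <- star_weight_values w) deg_stars_of_weight w x)%N.
  rewrite sum_values (bigD1 p) //=; case: (starP pS) => h2 _ _ _ _.
  by apply: leq_trans (leq_addr _ _); rewrite subn_gt0.
apply/negPn/negP => /mupNroot h; move: key; rewrite h leqn0 => /eqP e.
by rewrite e in pos.
Qed.
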